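(* Suppose that a group $G$ acts geometrically on a CAT(0) space $X$ and $|\partial X|>2$. Then for any $\alpha,\beta\in\partial X$ with $\alpha\neq\beta$, $$\limsup\{d_{\partial X}(g\alpha,g\beta)\mid g\in G\}>0.$$
   Context: A geometric action is an action by isometries which is proper and cocompact; such $X$ is proper. $\partial X$ is the visual boundary of $X$ (asymptote classes of geodesic rays), on which $G$ acts by homeomorphisms. A basepoint $x_0\in X$ is fixed; for $x\in X$ and $\alpha\in\partial X$, $\xi_{x,\alpha}$ denotes the unique geodesic ray with $\xi_{x,\alpha}(0)=x$ and $\xi_{x,\alpha}(\infty)=\alpha$. The metric on $\partial X$ is $d_{\partial X}(\alpha,\beta)=\sum_{i=1}^\infty\min\{d(\xi_{x_0,\alpha}(i),\xi_{x_0,\beta}(i)),\,2^{-i}\}$. For a function $f:G\to\mathbb{R}$, $\limsup\{f(g)\mid g\in G\}$ (resp. $\liminf$) denotes the limit superior (resp. inferior) of $f(g)$ as $g$ leaves every finite subset of $G$. *)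

(* Defs.v *)
From Stdlib Require Import Reals Lra List ClassicalEpsilon.
From Coquelicot Require Import Coquelicot.
Open Scope R_scope.

Section Defs.
Variable X : Type.
Variable d : X -> X -> R.

Definition is_metric : Prop :=
  (forall x y, d x y = 0 <-> x = y) /\
  (forall x y, d x y = d y x) /\
  (forall x y z, d x z <= d x y + d y z).

Definition geodesic_path (g : R -> X) (x y : X) : Prop :=
  g 0 = x /\ g 1 = y /\
  forall s t, 0 <= s <= 1 -> 0 <= t <= 1 -> d (g s) (g t) = Rabs (s - t) * d x y.

Definition geodesic_space : Prop :=
  forall x y, exists g, geodesic_path g x y.

Definition eucl (a b : R * R) : R :=
  sqrt ((fst a - fst b)^2 + (snd a - snd b)^2).
Definition seg_pt (a b : R * R) (s : R) : R * R :=
  (fst a + s * (fst b - fst a), snd a + s * (snd b - snd a)).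

(* CAT(0) inequality for geodesic triangles with sides g1 : p -> q,
   g2 : q -> r, g3 : r -> p and comparison triangle a b c in R^2 *)
Definition CAT0 : Prop :=
  is_metric /\ geodesic_space /\
  forall (p q r : X) (g1 g2 g3 : R -> X) (a b c : R * R),
    geodesic_path g1 p q -> geodesic_path g2 q r -> geodesic_path g3 r p ->
    eucl a b = d p q -> eucl b c = d q r -> eucl c a = d r p ->
    let sides := (g1, (a, b)) :: (g2, (b, c)) :: (g3, (c, a)) :: nil in
    forall i j s t, In i sides -> In j sides ->
      0 <= s <= 1 -> 0 <= t <= 1 ->
      d (fst i s) (fst j t) <= eucl (seg_pt (fst (snd i)) (snd (snd i)) s)
                                    (seg_pt (fst (snd j)) (snd (snd j)) t).

Definition ball (x : X) (r : R) : X -> Prop := fun y => d x y < r.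

Definition open_set (U : X -> Prop) : Prop :=
  forall x, U x -> exists e, 0 < e /\ forall y, ball x e y -> U y.

Definition compact_set (K : X -> Prop) : Prop :=
  forall (I : Type) (U : I -> X -> Prop),
    (forall i, open_set (U i)) ->
    (forall x, K x -> exists i, U i x) ->
    exists l : list I, forall x, K x -> exists i, In i l /\ U i x.

Definition geodesic_ray (xi : R -> X) : Prop :=
  forall s t, 0 <= s -> 0 <= t -> d (xi s) (xi t) = Rabs (s - t).

Definition asymptotic (xi eta : R -> X) : Prop :=
  exists C, forall t, 0 <= t -> d (xi t) (eta t) <= C.

(* xi_{x0,alpha}: the (unique, for complete CAT(0) X) geodesic ray from x0
   in the asymptote class of the ray xi *)
Definition ray_from (x0 : X) (xi : R -> X) : R -> X :=
  epsilon (inhabits (fun _ : R => x0))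
    (fun eta => geodesic_ray eta /\ eta 0 = x0 /\ asymptotic xi eta).

(* the metric on the visual boundary, evaluated on the classes of xi, eta *)
Definition dbd (x0 : X) (xi eta : R -> X) : R :=
  Series (fun n => Rmin (d (ray_from x0 xi (INR (S n))) (ray_from x0 eta (INR (S n))))
                        ((/ 2) ^ (S n))).
End Defs.

Section Group.
Variable G : Type.
Variables (mul : G -> G -> G) (inv : G -> G) (e : G).

Definition is_group : Prop :=
  (forall a b c, mul a (mul b c) = mul (mul a b) c) /\
  (forall a, mul e a = a) /\
  (forall a, mul (inv a) a = e).

Variable X : Type.
Variable d : X -> X -> R.
Variable act : G -> X -> X.

Definition isometric_action : Prop :=
  (forall x, act e x = x) /\
  (forall g h x, act (mul g h) x = act g (act h x)) /\
  (forall g x y, d (act g x) (act g y) = d x y).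

Definition proper_action : Prop :=
  forall x, exists r, 0 < r /\ exists l : list G,
    forall g, (exists y, ball X d x r y /\ ball X d x r (act g y)) -> In g l.

Definition cocompact_action : Prop :=
  exists K, compact_set X d K /\ forall x, exists g y, K y /\ x = act g y.

Definition geometric_action : Prop :=
  isometric_action /\ proper_action /\ cocompact_action.

(* limsup of f(g) as g leaves every finite subset of G *)
Definition limsupG (f : G -> R) : Rbar :=
  Rbar_glb (fun y => exists F : list G,
    y = Rbar_lub (fun z => exists g, ~ In g F /\ z = Finite (f g))).
End Group.

(* Main.v *)
Require Import Defs.
From Stdlib Require Import Reals Lra Psatz List ClassicalEpsilon Classical ZArith.
From Coquelicot Require Import Coquelicot.
Open Scope R_scope.


Lemma eucl_sq (a b : R*R) : (eucl a b)^2 = (fst a - fst b)^2 + (snd a - snd b)^2.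
Proof.
  unfold eucl. rewrite pow2_sqrt; [reflexivity|]. apply Rplus_le_le_0_compat; apply pow2_ge_0.
Qed.

Lemma eucl_nonneg a b : 0 <= eucl a b.
Proof. unfold eucl. apply sqrt_pos. Qed.

Lemma eucl_seg_sq (a b c : R*R) (l m : R) :
  (eucl (seg_pt a b l) (seg_pt c a (1 - m)))^2 =
  l^2 * (eucl a b)^2 + m^2 * (eucl c a)^2 - l*m*((eucl a b)^2 + (eucl c a)^2 - (eucl b c)^2).
Proof.
  rewrite !eucl_sq. unfold seg_pt; cbn [fst snd]. ring.
Qed.

Lemma cmp_tri (l1 l2 l3 : R) : 0 <= l1 -> 0 <= l2 -> 0 <= l3 ->
  l3 <= l1 + l2 -> l1 <= l2 + l3 -> l2 <= l1 + l3 ->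
  exists a b c : R*R, eucl a b = l1 /\ eucl b c = l3 /\ eucl c a = l2.
Proof.
  intros h1 h2 h3 t1 t2 t3.
  destruct (Req_dec l1 0) as [E|NE].
  - subst. exists (0,0), (0,0), (l2,0). unfold eucl; cbn [fst snd]. repeat split.
    + replace ((0-0)^2 + (0-0)^2) with 0 by ring. apply sqrt_0.
    + replace ((0 - l2) ^ 2 + (0 - 0) ^ 2) with (l3^2) by (assert (l2 = l3) by lra; subst; ring).
      apply sqrt_pow2; lra.
    + replace ((l2 - 0) ^ 2 + (0 - 0) ^ 2) with (l2^2) by ring. apply sqrt_pow2; lra.
  - set (x := (l1^2 + l2^2 - l3^2)/(2*l1)).
    assert (Hx : x^2 <= l2^2).
    { assert (0 < l1) by lra.
      assert (Hxe: x * (2*l1) = l1^2+l2^2-l3^2) by (unfold x; field; lra).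
      assert (-l2 <= x).
      { apply Rnot_lt_le; intro Hc. assert (x * (2*l1) < - l2 * (2*l1)) by nra. nra. }
      assert (x <= l2).
      { apply Rnot_lt_le; intro Hc. assert (l2 * (2*l1) < x * (2*l1)) by nra. nra. }
      nra. }
    set (y := sqrt (l2^2 - x^2)).
    assert (Hy : y^2 = l2^2 - x^2) by (unfold y; apply pow2_sqrt; lra).
    exists (0,0), (l1,0), (x,y). unfold eucl; cbn [fst snd]. repeat split.
    + replace ((0 - l1) ^ 2 + (0 - 0) ^ 2) with (l1^2) by ring. apply sqrt_pow2; lra.
    + replace ((l1 - x) ^ 2 + (0 - y) ^ 2) with (l3^2).
      apply sqrt_pow2; lra.
      replace ((0 - y)^2) with (y^2) by ring. rewrite Hy. unfold x. field. lra.
    + replace ((x - 0) ^ 2 + (y - 0) ^ 2) with (l2^2).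
      apply sqrt_pow2; lra.
      replace ((y - 0)^2) with (y^2) by ring. rewrite Hy. ring.
Qed.

Lemma divle (a b c : R) : 0 < b -> a <= c * b -> a / b <= c.
Proof. intros Hb H. replace a with ((a / b) * b) in H by (field; lra). nra. Qed.
Lemma ledivl (a b c : R) : 0 < b -> c * b <= a -> c <= a / b.
Proof. intros Hb H. replace a with ((a / b) * b) in H by (field; lra). nra. Qed.
Lemma divlt (a b c : R) : 0 < b -> a < c * b -> a / b < c.
Proof. intros Hb H. replace a with ((a / b) * b) in H by (field; lra). nra. Qed.
Lemma ltdivl (a b c : R) : 0 < b -> c * b < a -> c < a / b.
Proof. intros Hb H. replace a with ((a / b) * b) in H by (field; lra). nra. Qed.

Lemma cauchy_real (D Ln Lm n m : R) : 0 <= D -> 1 <= Ln -> 1 <= Lm -> 0 <= n <= m ->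
  Rabs (Ln - n) <= D -> Rabs (Lm - m) <= D ->
  (m - n)^2 - (Ln - Lm)^2 <= 4 * D * (1 + 2 * D) * Lm.
Proof.
  intros HD H1 H2 Hnm A1 A2. apply Rabs_le_between in A1. apply Rabs_le_between in A2.
  set (a := m - n). set (b := Lm - Ln).
  assert (Hab: a - 2*D <= b <= a + 2*D) by (unfold a, b; lra).
  assert (a^2 - b^2 <= 2 * D * (2*a + 2*D)).
  { destruct (Rle_dec 0 (a + b)).
    - assert (0 <= (2*D - (a - b)) * (a + b)) by (apply Rmult_le_pos; lra). nra.
    - assert (0 <= a) by (unfold a; lra). assert (0 <= (a - b)) by lra.
      assert ((a - b) * (a + b) <= 0) by (apply Rmult_le_0_l; lra).  nra. }
  replace ((Ln - Lm)^2) with (b^2) by (unfold b; ring).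
  assert (a <= Lm + D) by (unfold a; lra).
  nra.
Qed.

Section Geo.
Variable X : Type.
Variable d : X -> X -> R.
Hypothesis HC : CAT0 X d.

Lemma d_self x : d x x = 0.
Proof. destruct HC as [[H _] _]. apply H; reflexivity. Qed.
Lemma d_sym x y : d x y = d y x.
Proof. destruct HC as [[_ [H _]] _]. apply H. Qed.
Lemma d_tri x y z : d x z <= d x y + d y z.
Proof. destruct HC as [[_ [_ H]] _]. apply H. Qed.
Lemma d_nonneg x y : 0 <= d x y.
Proof. pose proof (d_tri x y x). rewrite d_self, (d_sym y x) in H. lra. Qed.
Lemma d_eq0 x y : d x y = 0 -> x = y.
Proof. destruct HC as [[H _] _]. apply H. Qed.
Lemma geod_ex x y : exists g, geodesic_path X d g x y.
Proof. destruct HC as [_ [H _]]. apply H. Qed.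

Lemma geod_rev g x y : geodesic_path X d g x y -> geodesic_path X d (fun s => g (1 - s)) y x.
Proof.
  intros [H0 [H1 H]]. split; [|split].
  - replace (1-0) with 1 by ring. exact H1.
  - replace (1-1) with 0 by ring. exact H0.
  - intros s t Hs Ht. rewrite H by lra. rewrite d_sym.
    f_equal. replace (1 - s - (1 - t)) with (-(s-t)) by ring. apply Rabs_Ropp.
Qed.

Lemma master (p P1 P2 : X) c1 c2 (l m : R) :
  geodesic_path X d c1 p P1 -> geodesic_path X d c2 p P2 ->
  0 <= l <= 1 -> 0 <= m <= 1 ->
  (d (c1 l) (c2 m))^2 <= l^2 * (d p P1)^2 + m^2 * (d p P2)^2
      - l*m*((d p P1)^2 + (d p P2)^2 - (d P1 P2)^2).
Proof.
  intros G1 G2 Hl Hm.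
  destruct (geod_ex P1 P2) as [g2 G2'].
  pose proof (geod_rev _ _ _ G2) as G3.
  assert (T: exists a b c : R*R, eucl a b = d p P1 /\ eucl b c = d P1 P2 /\ eucl c a = d P2 p).
  { pose proof (d_tri p P1 P2). pose proof (d_tri P1 p P2). pose proof (d_tri p P2 P1).
    pose proof (d_sym p P1). pose proof (d_sym p P2). pose proof (d_sym P1 P2).
    apply cmp_tri; try apply d_nonneg; lra. }
  destruct T as [a [b [c [E1 [E2 E3]]]]].
  destruct HC as [_ [_ H]].
  specialize (H p P1 P2 c1 g2 (fun s => c2 (1 - s)) a b c G1 G2' G3 E1 E2 E3).
  cbv zeta in H.
  specialize (H (c1, (a, b)) ((fun s => c2 (1 - s)), (c, a)) l (1 - m)).
  cbn [fst snd] in H.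
  assert (Hd: d (c1 l) (c2 (1 - (1 - m))) <= eucl (seg_pt a b l) (seg_pt c a (1 - m))).
  { apply H; [left; reflexivity| right; right; left; reflexivity | lra | lra]. }
  replace (1 - (1 - m)) with m in Hd by ring.
  pose proof (eucl_seg_sq a b c l m) as Q.
  rewrite E1, E2, E3, (d_sym P2 p) in Q.
  rewrite <- Q.
  pose proof (d_nonneg (c1 l) (c2 m)).
  apply pow_incr. lra.
Qed.

Lemma conv0 (p P1 P2 : X) c1 c2 (l : R) :
  geodesic_path X d c1 p P1 -> geodesic_path X d c2 p P2 -> 0 <= l <= 1 ->
  d (c1 l) (c2 l) <= l * d P1 P2.
Proof.
  intros G1 G2 Hl.
  pose proof (master p P1 P2 c1 c2 l l G1 G2 Hl Hl).
  pose proof (d_nonneg (c1 l) (c2 l)). pose proof (d_nonneg P1 P2).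
  assert (HH: (d (c1 l) (c2 l))^2 <= (l * d P1 P2)^2) by (rewrite Rpow_mult_distr; nra).
  assert (0 <= l * d P1 P2) by nra. nra.
Qed.

Lemma conv2 (a b a' b' : X) c c' (l : R) :
  geodesic_path X d c a b -> geodesic_path X d c' a' b' -> 0 <= l <= 1 ->
  d (c l) (c' l) <= (1 - l) * d a a' + l * d b b'.
Proof.
  intros G G' Hl.
  destruct (geod_ex a b') as [c'' G''].
  pose proof (conv0 _ _ _ _ _ l G G'' Hl) as H1.
  pose proof (conv0 _ _ _ _ _ (1 - l) (geod_rev _ _ _ G'') (geod_rev _ _ _ G') ltac:(lra)) as H2.
  cbv beta in H2. replace (1 - (1 - l)) with l in H2 by ring.
  pose proof (d_tri (c l) (c'' l) (c' l)).
  lra.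
Qed.

Lemma ray_seg xi a S : geodesic_ray X d xi -> 0 <= a -> 0 <= S ->
  geodesic_path X d (fun s => xi (a + s * S)) (xi a) (xi (a + S)).
Proof.
  intros R Ha HS. split; [|split].
  - f_equal; ring.
  - f_equal; ring.
  - intros s t Hs Ht. cbv beta. rewrite (R (a + s * S)) by nra. rewrite R by lra.
    replace (a + s * S - (a + t * S)) with ((s - t) * S) by ring.
    replace (a - (a + S)) with (- S) by ring.
    rewrite Rabs_mult, Rabs_Ropp, (Rabs_right S) by lra. reflexivity.
Qed.

Lemma ray_shift xi a : geodesic_ray X d xi -> 0 <= a -> geodesic_ray X d (fun s => xi (a + s)).
Proof.
  intros R Ha s t Hs Ht. rewrite R by lra. f_equal; ring.
Qed.

(* convex bounded function of two rays is bounded by its initial value *)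
Lemma ray_mon (u v : R -> X) C : geodesic_ray X d u -> geodesic_ray X d v ->
  (forall s, 0 <= s -> d (u s) (v s) <= C) ->
  forall s, 0 <= s -> d (u s) (v s) <= d (u 0) (v 0).
Proof.
  intros Ru Rv HCb s Hs.
  destruct (Rle_dec (d (u s) (v s)) (d (u 0) (v 0))) as [ok|nok]; [exact ok|exfalso].
  apply Rnot_le_lt in nok.
  set (f0 := d (u 0) (v 0)). set (fs := d (u s) (v s)). fold f0 fs in nok.
  assert (Hs0 : 0 < s).
  { destruct (Req_dec s 0) as [E|E]; [subst s; unfold fs, f0 in nok; lra | lra]. }
  assert (Hf0 : 0 <= f0) by apply d_nonneg.
  assert (HC0 : 0 <= C) by (pose proof (HCb 0 (Rle_refl 0)); pose proof (d_nonneg (u 0) (v 0)); lra).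
  set (S := s * (C + 1) / (fs - f0) + s).
  assert (HSpos : s < S).
  { unfold S. assert (0 < s * (C + 1) / (fs - f0)). apply Rdiv_lt_0_compat; nra. lra. }
  pose proof (conv2 _ _ _ _ _ _ (s / S) (ray_seg u 0 S Ru (Rle_refl 0) ltac:(lra))
      (ray_seg v 0 S Rv (Rle_refl 0) ltac:(lra))) as H.
  assert (Hl : 0 <= s / S <= 1).
  { split. apply Rdiv_le_0_compat; lra. apply divle; lra. }
  specialize (H Hl).
  assert (H' : fs <= (1 - s/S)*f0 + s/S * d (u S) (v S)).
  { eapply Rle_trans; [|eapply Rle_trans; [exact H|]].
    - right. unfold fs. f_equal; f_equal; field; lra.
    - right. unfold f0. repeat f_equal; ring. }
  clear H.
  pose proof (HCb S ltac:(lra)) as HS.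
  assert (Hk: fs <= f0 + s / S * (C - f0)) by nra.
  assert (Hk2: s / S * (C - f0) <= s / S * C).
  { assert (0 <= s / S) by lra. nra. }
  assert (Hd: (fs - f0) * S = s*(C+1) + s*(fs-f0)) by (unfold S; field; lra).
  assert (Hk3: s / S * C < fs - f0).
  { replace (s / S * C) with ((s*C)/S) by (field; lra). apply divlt; [lra|]. nra. }
  lra.
Qed.
End Geo.

Definition cauchy {X} (d : X -> X -> R) (x : nat -> X) := forall eps, 0 < eps ->
  exists N, forall n m, (N <= n)%nat -> (N <= m)%nat -> d (x n) (x m) < eps.
Definition conv_to {X} (d : X -> X -> R) (x : nat -> X) (l : X) := forall eps, 0 < eps ->
  exists N, forall n, (N <= n)%nat -> d (x n) l < eps.
Definition complete {X} (d : X -> X -> R) := forall x, cauchy d x -> exists l, conv_to d x l.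

Lemma archi_nat (r : R) : exists N : nat, r < INR N.
Proof.
  destruct (archimed r) as [H _]. destruct (Rle_dec 0 r).
  - exists (Z.to_nat (up r)). rewrite INR_IZR_INZ, Z2Nat.id. lra.
    apply le_IZR. lra.
  - exists 0%nat. simpl. lra.
Qed.

Lemma eq_of_small {X} (d : X -> X -> R) a b : 0 <= d a b -> (forall eps, 0 < eps -> d a b < eps) -> d a b = 0.
Proof.
  intros H0 H. destruct (Req_dec (d a b) 0); auto. exfalso.
  specialize (H (d a b) ltac:(lra)). lra.
Qed.

Section Ray.
Variable X : Type.
Variable d : X -> X -> R.
Hypothesis HC : CAT0 X d.
Hypothesis Hcomp : complete d.

Lemma ray_exists (y : X) (xi : R -> X) : geodesic_ray X d xi ->
  exists eta, geodesic_ray X d eta /\ eta 0 = y /\ asymptotic X d xi eta.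
Proof.
  intros Rxi.
  set (D := d y (xi 0)).
  assert (HD : 0 <= D) by apply (d_nonneg X d HC).
  set (gam := fun n : nat => epsilon (inhabits (fun _ : R => y))
                (fun g => geodesic_path X d g y (xi (INR n)))).
  assert (Ggam : forall n, geodesic_path X d (gam n) y (xi (INR n))).
  { intro n. unfold gam. apply epsilon_spec. apply (geod_ex X d HC). }
  set (L := fun n : nat => d y (xi (INR n))).
  assert (HL : forall n, Rabs (L n - INR n) <= D).
  { intro n. unfold L, D. 
    assert (E: d (xi 0) (xi (INR n)) = INR n).
    { rewrite Rxi by (try lra; apply pos_INR). rewrite Rabs_minus_sym, Rminus_0_r, Rabs_right; [reflexivity|]. apply Rle_ge, pos_INR. }
    pose proof (d_tri X d HC y (xi 0) (xi (INR n))).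
    pose proof (d_tri X d HC (xi 0) y (xi (INR n))).
    rewrite (d_sym X d HC (xi 0) y) in H0.
    apply Rabs_le. lra. }
  set (Gam := fun (n : nat) (s : R) => gam n (s / L n)).
  assert (Gdist : forall n s t, 0 <= s <= L n -> 0 <= t <= L n -> 0 < L n ->
     d (Gam n s) (Gam n t) = Rabs (s - t)).
  { intros n s t Hs Ht HLp. unfold Gam. destruct (Ggam n) as [_ [_ Gd]].
    rewrite Gd. fold (L n).
    replace (s / L n - t / L n) with ((s - t) / L n) by (field; lra).
    unfold Rdiv. rewrite Rabs_mult, Rabs_Rinv, (Rabs_right (L n)) by lra. field. lra.
    split. apply Rdiv_le_0_compat; lra. apply divle; lra.
    split. apply Rdiv_le_0_compat; lra. apply divle; lra. }
  assert (Hcau : forall s, 0 <= s -> cauchy d (fun n => Gam n s)).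
  { intros s Hs eps Heps.
    set (K := 4 * D * (1 + 2 * D)).
    assert (HK: 0 <= K) by (unfold K; nra).
    destruct (archi_nat (D + s + 1 + K * s^2 / eps^2)) as [N HN].
    exists N. intros n m Hn Hm.
    assert (HNn : INR N <= INR n) by (apply le_INR; lia).
    assert (HNm : INR N <= INR m) by (apply le_INR; lia).
    assert (HK2 : 0 <= K * s^2 / eps^2).
    { apply Rdiv_le_0_compat; [|nra]. apply Rmult_le_pos; [lra|nra]. }
    pose proof (HL n) as HLn. pose proof (HL m) as HLm.
    apply Rabs_le_between in HLn. apply Rabs_le_between in HLm.
    assert (Ln1 : 1 <= L n) by lra. assert (Lm1 : 1 <= L m) by lra.
    assert (Main : forall n m, (N <= n)%nat -> (N <= m)%nat -> (n <= m)%nat ->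
              d (Gam n s) (Gam m s) < eps).
    { clear n m Hn Hm HNn HNm HLn HLm Ln1 Lm1.
      intros n m Hn Hm Hnm.
      assert (HNn : INR N <= INR n) by (apply le_INR; lia).
      assert (HNm : INR N <= INR m) by (apply le_INR; lia).
      assert (Hnm' : INR n <= INR m) by (apply le_INR; lia).
      pose proof (HL n) as HLn. pose proof (HL m) as HLm.
      pose proof HLn as HLn'. pose proof HLm as HLm'.
      apply Rabs_le_between in HLn. apply Rabs_le_between in HLm.
      assert (Ln1 : 1 <= L n) by lra. assert (Lm1 : 1 <= L m) by lra.
      assert (Hl : 0 <= s / L n <= 1) by (split; [apply Rdiv_le_0_compat; lra| apply divle; lra]).
      assert (Hm' : 0 <= s / L m <= 1) by (split; [apply Rdiv_le_0_compat; lra| apply divle; lra]).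
      pose proof (master X d HC _ _ _ _ _ _ _ (Ggam n) (Ggam m) Hl Hm') as M.
      fold (L n) (L m) in M.
      assert (Exx : d (xi (INR n)) (xi (INR m)) = INR m - INR n).
      { rewrite Rxi by apply pos_INR. rewrite Rabs_minus_sym, Rabs_right; lra. }
      rewrite Exx in M.
      assert (M2 : (d (Gam n s) (Gam m s))^2 <= s^2 * ((INR m - INR n)^2 - (L n - L m)^2) / (L n * L m)).
      { unfold Gam. eapply Rle_trans; [exact M|]. right. field. lra. }
      pose proof (cauchy_real D (L n) (L m) (INR n) (INR m) HD Ln1 Lm1 ltac:(split; [apply pos_INR|lra]) HLn' HLm') as CR.
      assert (M3 : (d (Gam n s) (Gam m s))^2 <= s^2 * K / L n).
      { eapply Rle_trans; [exact M2|]. unfold K.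
        apply divle; [nra|].
        replace (s ^ 2 * (4 * D * (1 + 2 * D)) / L n * (L n * L m)) with
          (s^2 * (4 * D * (1 + 2 * D) * L m)) by (field; lra).
        apply Rmult_le_compat_l; [nra|lra]. }
      assert (M4 : s^2 * K / L n < eps^2).
      { apply divlt; [lra|].
        assert (K * s^2 / eps^2 < L n) by lra.
        assert (K * s^2 < L n * eps^2).
        { replace (K * s^2) with (K * s^2 / eps^2 * eps^2) by (field; lra). nra. }
        nra. }
      pose proof (d_nonneg X d HC (Gam n s) (Gam m s)). nra. }
    destruct (le_ge_dec n m) as [Hle|Hge].
    - apply Main; auto.
    - rewrite (d_sym X d HC). apply Main; auto. }
  set (eta := fun s => epsilon (inhabits y) (fun l => conv_to d (fun n => Gam n s) l)).
  assert (Heta : forall s, 0 <= s -> conv_to d (fun n => Gam n s) (eta s)).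
  { intros s Hs. unfold eta. apply epsilon_spec. apply Hcomp. apply Hcau. exact Hs. }
  assert (Big : forall (r : R) (N0 : nat), exists n, (N0 <= n)%nat /\ r <= L n).
  { intros r N0. destruct (archi_nat (r + D)) as [M HM].
    exists (Nat.max N0 M). split; [lia|].
    pose proof (HL (Nat.max N0 M)) as H. apply Rabs_le_between in H.
    assert (INR M <= INR (Nat.max N0 M)) by (apply le_INR; lia). lra. }
  exists eta. split; [|split].
  - intros s t Hs Ht.
    assert (E0 : forall eps, 0 < eps -> Rabs (d (eta s) (eta t) - Rabs (s - t)) < eps).
    { intros eps Heps.
      destruct (Heta s Hs (eps/2) ltac:(lra)) as [N1 H1].
      destruct (Heta t Ht (eps/2) ltac:(lra)) as [N2 H2].
      destruct (Big (s + t + 1) (Nat.max N1 N2)) as [n [Hn HLn]].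
      specialize (H1 n ltac:(lia)). specialize (H2 n ltac:(lia)). cbv beta in H1, H2.
      rewrite <- (Gdist n s t) by lra.
      pose proof (d_tri X d HC (eta s) (Gam n s) (eta t)).
      pose proof (d_tri X d HC (Gam n s) (Gam n t) (eta t)).
      pose proof (d_tri X d HC (Gam n s) (eta s) (Gam n t)).
      pose proof (d_tri X d HC (eta s) (eta t) (Gam n t)).
      rewrite (d_sym X d HC (eta s) (Gam n s)) in *.
      rewrite (d_sym X d HC (eta t) (Gam n t)) in *.
      apply Rabs_lt_between. lra. }
    pose proof (d_nonneg X d HC (eta s) (eta t)).
    destruct (Req_dec (d (eta s) (eta t)) (Rabs (s - t))) as [ok|nok]; auto.
    exfalso. specialize (E0 (Rabs (d (eta s) (eta t) - Rabs (s - t)))).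
    assert (0 < Rabs (d (eta s) (eta t) - Rabs (s - t))) by (apply Rabs_pos_lt; lra).
    specialize (E0 H0). lra.
  - apply (d_eq0 X d HC). rewrite (d_sym X d HC).
    apply eq_of_small; [apply (d_nonneg X d HC)|].
    intros eps Heps. destruct (Heta 0 (Rle_refl 0) eps Heps) as [N HN].
    specialize (HN N (le_n N)). cbv beta in HN.
    replace (Gam N 0) with y in HN; [exact HN|].
    unfold Gam. replace (0 / L N) with 0 by (unfold Rdiv; ring).
    destruct (Ggam N) as [G0 _]. auto.
  - exists (2 * D + 1). intros s Hs.
    destruct (Heta s Hs 1 ltac:(lra)) as [N1 H1].
    destruct (archi_nat (s + D + 1)) as [M HM].
    set (n := Nat.max N1 M).
    specialize (H1 n ltac:(unfold n; lia)). cbv beta in H1.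
    assert (HnM : INR M <= INR n) by (apply le_INR; unfold n; lia).
    pose proof (HL n) as HLn. apply Rabs_le_between in HLn.
    assert (Hn0 : 0 < INR n) by lra.
    assert (A1 : d (gam n (s / INR n)) (xi s) <= D).
    { pose proof (conv2 X d HC _ _ _ _ _ _ (s / INR n) (Ggam n)
          (ray_seg X d xi 0 (INR n) Rxi (Rle_refl 0) ltac:(lra))) as C2.
      assert (Hl : 0 <= s / INR n <= 1) by (split; [apply Rdiv_le_0_compat; lra| apply divle; lra]).
      specialize (C2 Hl). cbv beta in C2.
      replace (0 + s / INR n * INR n) with s in C2 by (field; lra).
      replace (0 + INR n) with (INR n) in C2 by ring.
      rewrite d_self in C2 by exact HC. fold D in C2. nra. }
    assert (A2 : d (Gam n s) (gam n (s / INR n)) <= D).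
    { unfold Gam. destruct (Ggam n) as [_ [_ Gd]].
      assert (HLp : 0 < L n) by lra.
      rewrite Gd. fold (L n).
      replace (s / L n - s / INR n) with (s * (INR n - L n) / (L n * INR n)) by (field; lra).
      unfold Rdiv. rewrite Rabs_mult, Rabs_mult, Rabs_Rinv, Rabs_mult by nra.
      rewrite (Rabs_right (L n)), (Rabs_right (INR n)), (Rabs_right s) by lra.
      pose proof (HL n) as HH. rewrite Rabs_minus_sym in HH.
      replace (s * Rabs (INR n - L n) * / (L n * INR n) * L n) with
         ((s / INR n) * Rabs (INR n - L n)) by (field; lra).
      assert (s / INR n <= 1) by (apply divle; lra).
      assert (0 <= s / INR n) by (apply Rdiv_le_0_compat; lra).
      pose proof (Rabs_pos (INR n - L n)). nra.
      split. apply Rdiv_le_0_compat; lra. apply divle; lra.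
      split. apply Rdiv_le_0_compat; lra. apply divle; lra. }
    pose proof (d_tri X d HC (xi s) (Gam n s) (eta s)).
    pose proof (d_tri X d HC (Gam n s) (gam n (s / INR n)) (xi s)).
    pose proof (d_sym X d HC (xi s) (Gam n s)). pose proof (d_sym X d HC (Gam n s) (eta s)). lra.
Qed.
End Ray.

Lemma fin_unif {A : Type} (l : list A) (Q : A -> R -> nat -> Prop) :
  (forall a e e' M M', Q a e M -> 0 < e' <= e -> (M <= M')%nat -> Q a e' M') ->
  (forall a, In a l -> exists e M, 0 < e /\ Q a e M) ->
  exists e M, 0 < e /\ forall a, In a l -> Q a e M.
Proof.
  intros Hmon. induction l as [|a l IH]; intros H.
  - exists 1, 0%nat. split; [lra|]. intros a [].
  - destruct (H a (or_introl eq_refl)) as [e1 [M1 [He1 Q1]]].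
    destruct IH as [e2 [M2 [He2 Q2]]].
    { intros b Hb. apply H. right. exact Hb. }
    exists (Rmin e1 e2), (Nat.max M1 M2). split.
    + apply Rmin_pos; lra.
    + intros b [Hb|Hb].
      * subst b. eapply Hmon; [exact Q1| |lia]. split; [apply Rmin_pos; lra|apply Rmin_l].
      * eapply Hmon; [exact (Q2 b Hb)| |lia]. split; [apply Rmin_pos; lra|apply Rmin_r].
Qed.

Lemma list_maxR {A : Type} (l : list A) (f : A -> R) : exists B, forall a, In a l -> f a <= B.
Proof.
  induction l as [|a l [B HB]].
  - exists 0. intros a [].
  - exists (Rmax (f a) B). intros b [Hb|Hb].
    + subst. apply Rmax_l.
    + eapply Rle_trans; [apply HB; exact Hb| apply Rmax_r].
Qed.

Section Comp.
Variable X : Type.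
Variable d : X -> X -> R.
Hypothesis HC : CAT0 X d.
Variable G : Type.
Variables (mul : G -> G -> G) (inv : G -> G) (e : G).
Hypothesis Hgrp : is_group G mul inv e.
Variable act : G -> X -> X.
Hypothesis Hiso : isometric_action G mul e X d act.
Hypothesis Hprop : proper_action G X d act.
Hypothesis Hcoc : cocompact_action G X d act.

Lemma mul_inv_r a : mul a (inv a) = e.
Proof.
  destruct Hgrp as [As [Id Iv]].
  rewrite <- (Id (mul a (inv a))).
  rewrite <- (Iv (inv a)) at 1.
  rewrite <- As. rewrite (As (inv a) a (inv a)). rewrite Iv, Id. apply Iv.
Qed.
Lemma mul_e_r a : mul a e = a.
Proof.
  destruct Hgrp as [As [Id Iv]].
  rewrite <- (Iv a). rewrite As, mul_inv_r. apply Id.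
Qed.
Lemma inv_inv a : inv (inv a) = a.
Proof.
  destruct Hgrp as [As [Id Iv]].
  rewrite <- (mul_e_r (inv (inv a))). rewrite <- (Iv a), As, Iv. apply Id.
Qed.
Lemma act_inv_l g x : act (inv g) (act g x) = x.
Proof.
  destruct Hiso as [H1 [H2 _]]. destruct Hgrp as [As [Id Iv]].
  rewrite <- H2, Iv. apply H1.
Qed.
Lemma act_inv_r g x : act g (act (inv g) x) = x.
Proof.
  destruct Hiso as [H1 [H2 _]].
  rewrite <- H2, mul_inv_r. apply H1.
Qed.
Lemma act_iso g x y : d (act g x) (act g y) = d x y.
Proof. destruct Hiso as [_ [_ H]]. apply H. Qed.

Lemma ball_open x r : Defs.open_set X d (Defs.ball X d x r).
Proof.
  intros y Hy. unfold Defs.ball in *. exists (r - d x y). split; [lra|].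
  intros z Hz. pose proof (d_tri X d HC x y z). lra.
Qed.

Lemma complete_X : complete d.
Proof.
  intros x Hx.
  destruct Hcoc as [K [HK Hcov]].
  set (gk := fun n => epsilon (inhabits (e, x n)) (fun p => K (snd p) /\ x n = act (fst p) (snd p))).
  assert (Hgk : forall n, K (snd (gk n)) /\ x n = act (fst (gk n)) (snd (gk n))).
  { intro n. unfold gk. apply epsilon_spec. destruct (Hcov (x n)) as [g [y [Hy Ey]]].
    exists (g, y). auto. }
  set (g := fun n => fst (gk n)). set (w := fun n => snd (gk n)).
  assert (Hw : forall n, K (w n)) by (intro n; apply Hgk).
  assert (Hxw : forall n, x n = act (g n) (w n)) by (intro n; apply Hgk).
  assert (Clu : exists c, forall eps, 0 < eps -> forall M, exists n, (M <= n)%nat /\ d c (w n) < eps).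
  { apply NNPP. intro Hn.
    assert (Hall : forall k, exists p : R * nat, 0 < fst p /\ forall n, (snd p <= n)%nat -> fst p <= d k (w n)).
    { intro k. apply NNPP. intro Hk. apply Hn. exists k. intros eps Heps M.
      apply NNPP. intro Hm. apply Hk. exists (eps, M). cbn [fst snd]. split; [exact Heps|].
      intros n Hnn. apply Rnot_lt_le. intro Hlt. apply Hm. exists n. auto. }
    set (pf := fun k => epsilon (inhabits (1, 0%nat))
        (fun p : R * nat => 0 < fst p /\ forall n, (snd p <= n)%nat -> fst p <= d k (w n))).
    assert (Hpf : forall k, 0 < fst (pf k) /\ forall n, (snd (pf k) <= n)%nat -> fst (pf k) <= d k (w n)).
    { intro k. unfold pf. apply epsilon_spec. apply Hall. }
    destruct (HK X (fun k => Defs.ball X d k (fst (pf k)))) as [l Hl].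
    - intro k. apply ball_open.
    - intros k _. exists k. unfold Defs.ball. rewrite d_self by exact HC. apply Hpf.
    - assert (HM : exists M, forall k, In k l -> (snd (pf k) <= M)%nat).
      { clear Hl. induction l as [|a l [M HM]].
        - exists 0%nat. intros k [].
        - exists (Nat.max (snd (pf a)) M). intros k [Hk|Hk]; [subst; lia|].
          specialize (HM k Hk). lia. }
      destruct HM as [M HM].
      destruct (Hl (w M) (Hw M)) as [k [Hkl Hkb]].
      unfold Defs.ball in Hkb. pose proof (proj2 (Hpf k) M (HM k Hkl)). lra. }
  destruct Clu as [c Hc].
  destruct (Hprop c) as [r [Hr [Phi HPhi]]].
  destruct (Hx (r/3) ltac:(lra)) as [N HN].
  destruct (Hc (r/3) ltac:(lra) N) as [n0 [Hn0 Hcn0]].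
  set (cand := fun phi => act (inv (mul phi (inv (g n0)))) c).
  assert (Key : forall m, (N <= m)%nat -> d c (w m) < r/3 ->
     In (mul (inv (g m)) (g n0)) Phi /\ cand (mul (inv (g m)) (g n0)) = act (g m) c).
  { intros m Hm Hcm. split.
    - apply HPhi. exists (w n0). unfold Defs.ball. split; [lra|].
      destruct Hiso as [_ [H2 _]]. rewrite H2, <- Hxw.
      pose proof (d_tri X d HC c (w m) (act (inv (g m)) (x n0))).
      replace (w m) with (act (inv (g m)) (x m)) in H by (rewrite Hxw; apply act_inv_l).
      rewrite act_iso in H. assert (Ew: act (inv (g m)) (x m) = w m) by (rewrite Hxw; apply act_inv_l). rewrite Ew in H. specialize (HN m n0 Hm Hn0). lra.
    - unfold cand. destruct Hgrp as [As _].
      rewrite <- As, mul_inv_r, mul_e_r, inv_inv. reflexivity. }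
  assert (Pig : exists phi, forall eps, 0 < eps -> forall M, exists m, (M <= m)%nat /\ d (x m) (cand phi) < eps).
  { apply NNPP. intro Hn.
    assert (Hall : forall phi, In phi Phi -> exists eps M, 0 < eps /\
        (forall m, (M <= m)%nat -> eps <= d (x m) (cand phi))).
    { intros phi _. apply NNPP. intro Hk. apply Hn. exists phi. intros eps Heps M.
      apply NNPP. intro Hm. apply Hk. exists eps, M. split; [exact Heps|].
      intros m Hmm. apply Rnot_lt_le. intro Hlt. apply Hm. exists m. auto. }
    destruct (fin_unif Phi (fun phi eps M => forall m, (M <= m)%nat -> eps <= d (x m) (cand phi)))
      as [eps [M [Heps HM]]].
    - intros a e1 e' M1 M' H1 He' HM' m Hm. specialize (H1 m ltac:(lia)). lra.
    - exact Hall.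
    - destruct (Hc (Rmin eps (r/3)) ltac:(apply Rmin_pos; lra) (Nat.max M N)) as [m [Hm Hcm]].
      destruct (Key m ltac:(lia)) as [Hin Hcand].
      { eapply Rlt_le_trans; [exact Hcm| apply Rmin_r]. }
      specialize (HM _ Hin m ltac:(lia)). rewrite Hcand, Hxw, act_iso in HM.
      rewrite (d_sym X d HC) in HM.
      assert (Rmin eps (r/3) <= eps) by apply Rmin_l. lra. }
  destruct Pig as [phi Hphi].
  exists (cand phi). intros eps Heps.
  destruct (Hx (eps/2) ltac:(lra)) as [N2 HN2].
  exists N2. intros n Hn.
  destruct (Hphi (eps/2) ltac:(lra) N2) as [m [Hm Hdm]].
  specialize (HN2 n m Hn Hm).
  pose proof (d_tri X d HC (x n) (x m) (cand phi)). lra.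
Qed.
End Comp.

Lemma final_alg (t t' n kappa D0 : R) :
  0 <= D0 -> 0 < kappa <= 1 -> 1 <= n -> n * kappa >= 4 * D0 + 5 ->
  t >= n * (4 * D0 + 5) -> t - D0 <= t' <= t + D0 -> 0 <= t' ->
  t'^2 + n^2 + n * (t * (2 - kappa) + 2 * D0 + 1) <= (t + n - D0 - 2)^2.
Proof.
  intros. assert (t'^2 <= (t + D0)^2) by nra.
  assert (0 <= t) by nra.
  assert (t*(n*kappa - (4*D0+5)) >= 0) by nra. nra.
Qed.

Lemma mid_alg (S t Z L D0 A kappa : R) :
  0 <= D0 -> 0 < kappa <= 1 -> 0 <= t -> A = t * (2 - kappa) + 2 * D0 ->
  Z^2 >= t^2 + S^2 - t*S*(2 - kappa) -> Z >= S - t ->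
  S >= t + t^2 + (A + 1) * D0 + D0 + 1 -> L >= Z - D0 ->
  S^2 - L^2 <= (A + 1) * L.
Proof.
  intros HD Hk Ht HA HZ2 HZ HS HL.
  assert (HA0 : 0 <= A) by (subst A; nra).
  assert (0 <= (A+1)*D0) by nra. assert (0 <= t^2) by nra.
  assert (HZD : Z - D0 > 0) by lra.
  assert (S^2 <= (Z - D0)^2 + (A + 1) * (Z - D0)).
  { assert (H1: t*(2-kappa)*(Z - (S - t)) >= 0) by (apply Rle_ge, Rmult_le_pos; nra).
    assert (t*(2-kappa)*Z >= t*(2-kappa)*S - t^2*(2-kappa)) by nra.
    assert (t^2*(1-kappa) <= t^2) by nra.
    assert (Z >= t^2*(1-kappa) + (A+1)*D0) by nra.
    subst A. nra. }
  nra.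
Qed.

Lemma sq_le (a b : R) : 0 <= a -> 0 <= b -> a^2 <= b^2 -> a <= b.
Proof. intros. nra. Qed.

Section Core.
Variable X : Type.
Variable d : X -> X -> R.
Hypothesis HC : CAT0 X d.

Lemma core (q : X) (tau rho : R -> X) (T kappa D0 n : R) :
  geodesic_ray X d tau -> geodesic_ray X d rho -> tau 0 = q -> rho 0 = q ->
  0 < T -> 0 < kappa <= 1 ->
  (forall t S, T <= t -> T <= S -> (d (tau t) (rho S))^2 >= t^2 + S^2 - t*S*(2 - kappa)) ->
  0 <= D0 -> 1 <= n -> n * kappa >= 4 * D0 + 5 ->
  forall t y s1 s2, t >= T -> t >= n * (4 * D0 + 5) -> t >= D0 + 1 ->
  d y (tau t) <= D0 ->
  geodesic_ray X d s1 -> s1 0 = y -> (exists C, forall s, 0 <= s -> d (s1 s) (rho s) <= C) ->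
  geodesic_ray X d s2 -> s2 0 = y -> (exists C, forall s, 0 <= s -> d (s2 s) (tau s) <= C) ->
  1 <= d (s1 n) (s2 n).
Proof.
  intros Rt Rr Ht0 Hr0 HT Hk Hang HD0 Hn Hnk t y s1 s2 HtT Htn HtD Hyt R1 E1 [C1 HC1] R2 E2 [C2 HC2].
  pose proof (d_nonneg X d HC) as dpos.
  pose proof (d_tri X d HC) as dtri.
  pose proof (d_sym X d HC) as dsym.
  assert (Rtt : forall a b, 0 <= a -> 0 <= b -> d (tau a) (tau b) = Rabs (a - b)) by (intros; apply Rt; lra).
  assert (St2 : forall s, 0 <= s -> d (s2 s) (tau (t + s)) <= D0).
  { intros s Hs.
    pose proof (ray_mon X d HC s2 (fun s => tau (t + s)) (C2 + t) R2 (ray_shift X d tau t Rt ltac:(lra))) as M.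
    cbv beta in M. replace (t + 0) with t in M by ring. rewrite E2 in M.
    assert (Hb: forall s0, 0 <= s0 -> d (s2 s0) (tau (t + s0)) <= C2 + t).
    { intros s0 Hs0. pose proof (dtri (s2 s0) (tau s0) (tau (t + s0))). rewrite Rtt in H by lra.
      replace (s0 - (t + s0)) with (- t) in H by ring. rewrite Rabs_Ropp, Rabs_right in H by lra.
      specialize (HC2 s0 Hs0). lra. }
    specialize (M Hb s Hs). lra. }
  assert (Q2 : t + n - D0 <= d q (s2 n)).
  { pose proof (St2 n ltac:(lra)). pose proof (dtri q (s2 n) (tau (t + n))).
    assert (d q (tau (t+n)) = t+n) by (rewrite <- Ht0, Rtt by lra; rewrite Rabs_left1 by lra; ring).
    lra. }
  set (t' := d q y).
  assert (Ht' : t - D0 <= t' <= t + D0).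
  { pose proof (dtri q y (tau t)). pose proof (dtri q (tau t) y).
    assert (d q (tau t) = t) by (rewrite <- Ht0, Rtt by lra; rewrite Rabs_left1 by lra; ring).
    rewrite (dsym (tau t) y) in H0. unfold t'. lra. }
  assert (HC1p : 0 <= C1) by (specialize (HC1 0 (Rle_refl 0)); specialize (dpos (s1 0) (rho 0)); lra).
  set (A := t * (2 - kappa) + 2 * D0).
  assert (HA0 : 0 <= A) by (unfold A; nra).
  set (S := T + (t + D0 + n) + (t + t^2 + (A + 1) * D0 + D0 + 1) + n * (C1 + t') + 1).
  assert (HtS : 0 <= n * (C1 + t')) by (assert (0 <= t') by (unfold t'; apply dpos); nra).
  assert (HS1 : S >= t + t^2 + (A + 1) * D0 + D0 + 1) by (unfold S; nra).
  assert (HS2 : S >= t + D0 + n) by (unfold S; nra).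
  assert (HS3 : S >= n * (C1 + t') + 1) by (unfold S; nra).
  assert (HS4 : S >= T) by (unfold S; nra).
  set (P := rho S).
  assert (HqP : d q P = S) by (unfold P; rewrite <- Hr0, Rr by lra; rewrite Rabs_left1 by lra; ring).
  set (Z := d (tau t) P).
  assert (HZ2 : Z^2 >= t^2 + S^2 - t*S*(2 - kappa)) by (apply Hang; lra).
  assert (HZ : Z >= S - t).
  { pose proof (dtri q (tau t) P). assert (d q (tau t) = t) by (rewrite <- Ht0, Rtt by lra; rewrite Rabs_left1 by lra; ring).
    unfold Z. lra. }
  set (L := d y P).
  assert (HL : L >= Z - D0) by (pose proof (dtri (tau t) y P); rewrite (dsym (tau t) y) in H; unfold L, Z; lra).
  assert (HLS : Rabs (L - S) <= t').
  { pose proof (dtri y q P). pose proof (dtri q y P). rewrite (dsym y q) in H.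
    apply Rabs_le. unfold L, t'. lra. }
  assert (HLn : L >= n) by lra.
  pose proof (mid_alg S t Z L D0 A kappa HD0 Hk ltac:(lra) eq_refl HZ2 HZ HS1 HL) as Mid.
  destruct (geod_ex X d HC y P) as [gam Ggam].
  destruct (geod_ex X d HC y q) as [gq Ggq].
  assert (Hm : 0 <= n / L <= 1) by (split; [apply Rdiv_le_0_compat; lra| apply divle; lra]).
  pose proof (master X d HC _ _ _ _ _ 1 (n / L) Ggq Ggam ltac:(lra) Hm) as M.
  destruct Ggq as [_ [Gq1 _]]. rewrite Gq1 in M.
  fold t' in M. rewrite (dsym y q) in M. fold t' L in M. rewrite HqP in M.
  assert (M2 : (d q (gam (n / L)))^2 <= t'^2 + n^2 + n * (S^2 - t'^2 - L^2) / L).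
  { eapply Rle_trans; [exact M|]. right. field. lra. }
  assert (M3 : n * (S^2 - t'^2 - L^2) / L <= n * (A + 1)).
  { apply divle; [lra|]. assert (0 <= t'^2) by nra. nra. }
  assert (0 <= t') by (unfold t'; apply dpos).
  pose proof (final_alg t t' n kappa D0 HD0 Hk Hn Hnk Htn Ht' H) as Fin.
  assert (M4 : d q (gam (n / L)) <= t + n - D0 - 2).
  { pose proof (dpos q (gam (n / L))). assert (0 <= t + n - D0 - 2) by lra. unfold A in M3.
    apply sq_le; [assumption|assumption|lra]. }
  assert (A1 : d (s1 n) (gam (n / S)) <= n * C1 / S).
  { pose proof (ray_seg X d s1 0 S R1 (Rle_refl 0) ltac:(lra)) as RS. rewrite E1 in RS.
    pose proof (conv0 X d HC _ _ _ _ _ (n / S) RS Ggam) as C0.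
    assert (Hl : 0 <= n / S <= 1) by (split; [apply Rdiv_le_0_compat; lra| apply divle; lra]).
    specialize (C0 Hl). cbv beta in C0.
    replace (0 + n / S * S) with n in C0 by (field; lra).
    replace (0 + S) with S in C0 by ring.
    specialize (HC1 S ltac:(lra)). fold P in HC1.
    replace (n * C1 / S) with (n / S * C1) by (field; lra).
    assert (0 <= n / S) by lra. nra. }
  assert (A2 : d (gam (n / S)) (gam (n / L)) <= n * t' / S).
  { destruct Ggam as [_ [_ Gd]].
    assert (Hl : 0 <= n / S <= 1) by (split; [apply Rdiv_le_0_compat; lra| apply divle; lra]).
    rewrite Gd by assumption. fold L.
    replace (n / S - n / L) with (n * (L - S) / (S * L)) by (field; lra).
    assert (SL: S * L <> 0) by (apply Rmult_integral_contrapositive; split; lra).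
    unfold Rdiv. rewrite Rabs_mult, Rabs_mult, (Rabs_Rinv (S * L) SL), Rabs_mult.
    rewrite (Rabs_right n), (Rabs_right S), (Rabs_right L) by lra.
    replace (n * Rabs (L - S) * / (S * L) * L) with (n / S * Rabs (L - S)) by (field; lra).
    replace (n * t' * / S) with (n / S * t') by (field; lra).
    assert (0 <= n / S) by (apply Rdiv_le_0_compat; lra). nra. }
  assert (A3 : n * C1 / S + n * t' / S <= 1).
  { replace (n * C1 / S + n * t' / S) with ((n * (C1 + t')) / S) by (field; lra).
    apply divle; lra. }
  assert (Q1 : d q (s1 n) <= t + n - D0 - 1).
  { pose proof (dtri q (gam (n / L)) (s1 n)). pose proof (dtri (s1 n) (gam (n / S)) (gam (n / L))).
    rewrite (dsym (gam (n / L)) (s1 n)) in H0. lra. }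
  pose proof (dtri q (s1 n) (s2 n)). lra.
Qed.
End Core.

Lemma series_ge (a : nat -> R) : (forall k, 0 <= a k) -> ex_series a -> forall k, a k <= Series a.
Proof.
  intros Hpos Hex k. revert a Hpos Hex. induction k as [|k IH]; intros a Hpos Hex.
  - rewrite Series_incr_1 by exact Hex.
    assert (0 <= Series (fun k => a (S k))).
    { assert (Z0: Series (fun _ : nat => 0) = 0).
      { rewrite <- (Series_ext (fun n => 0 * a n)) by (intro; ring). rewrite Series_scal_l. ring. }
      rewrite <- Z0. apply Series_le; [intro n; split; [lra|apply Hpos]|].
      apply (proj1 (ex_series_incr_1 a)). exact Hex. }
    lra.
  - rewrite Series_incr_1 by exact Hex.
    assert (a (S k) <= Series (fun k => a (S k))).
    { apply (IH (fun k => a (S k))); [intro; apply Hpos| apply (proj1 (ex_series_incr_1 a)); exact Hex]. }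
    pose proof (Hpos 0%nat). lra.
Qed.

Lemma ex_series_half (a : nat -> R) : (forall k, 0 <= a k <= (/2)^(S k)) -> ex_series a.
Proof.
  intros H. apply (ex_series_le a (fun k => (/2)^(S k))).
  - intro n. unfold norm; simpl. unfold abs; simpl. rewrite Rabs_right by (apply Rle_ge, H). apply H.
  - apply (ex_series_incr_1 (fun k => (/2)^k)). apply ex_series_geom. rewrite Rabs_right; lra.
Qed.

Theorem theorem3p1 (X : Type) (d : X -> X -> R) (x0 : X)
  (G : Type) (mul : G -> G -> G) (inv : G -> G) (e : G) (act : G -> X -> X) :
  CAT0 X d ->
  is_group G mul inv e ->
  geometric_action G mul e X d act ->
  (* |boundary X| > 2 *)
  (exists r1 r2 r3 : R -> X,
     geodesic_ray X d r1 /\ geodesic_ray X d r2 /\ geodesic_ray X d r3 /\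
     ~ asymptotic X d r1 r2 /\ ~ asymptotic X d r2 r3 /\ ~ asymptotic X d r1 r3) ->
  forall alpha beta : R -> X,
    geodesic_ray X d alpha -> geodesic_ray X d beta ->
    ~ asymptotic X d alpha beta ->
    Rbar_lt (Finite 0)
      (limsupG G (fun g => dbd X d x0 (fun t => act g (alpha t)) (fun t => act g (beta t)))).
Proof.
  intros HC Hgrp [Hiso [Hprop Hcoc]] _ alpha beta Ra Rb Hna.
  pose proof (d_nonneg X d HC) as dpos.
  pose proof (d_tri X d HC) as dtri.
  pose proof (d_sym X d HC) as dsym.
  pose proof (complete_X X d HC G mul inv e Hgrp act Hiso Hprop Hcoc) as Hcomp.
  pose proof (ray_exists X d HC Hcomp) as RE.
  pose proof (act_iso X d G mul e act Hiso) as Aiso.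
  pose proof (act_inv_l X d G mul inv e Hgrp act Hiso) as AinvL.
  pose proof (act_inv_r X d G mul inv e Hgrp act Hiso) as AinvR.
  assert (Rayact : forall g xi, geodesic_ray X d xi -> geodesic_ray X d (fun s => act g (xi s))).
  { intros g xi R s t Hs Ht. rewrite Aiso. apply R; assumption. }
  assert (HD0 : exists D0, 0 <= D0 /\ forall x, exists h, d (act h x0) x <= D0).
  { destruct Hcoc as [K [HK Hcov]].
    destruct (HK X (fun k => Defs.ball X d k 1)) as [l Hl].
    - intro k. apply (ball_open X d HC).
    - intros k _. exists k. unfold Defs.ball. rewrite (d_self X d HC). lra.
    - destruct (list_maxR l (fun i => d x0 i)) as [B HB].
      exists (Rmax 0 (B + 1)). split; [apply Rmax_l|].
      intro x. destruct (Hcov x) as [g [k [Hk Ex]]]. exists g. subst x. rewrite Aiso.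
      destruct (Hl k Hk) as [i [Hi Hb]]. unfold Defs.ball in Hb.
      specialize (HB i Hi). cbv beta in HB. pose proof (dtri x0 i k).
      eapply Rle_trans; [|apply Rmax_r]. lra. }
  destruct HD0 as [D0 [HD0 Hnear]].
  set (q := beta 0).
  destruct (RE q alpha Ra) as [rho [Rr [Hr0 [Ca HCa]]]].
  assert (HT : exists T, 0 < T /\ 0 < d (beta T) (rho T)).
  { apply NNPP. intro Hn. apply Hna. exists Ca. intros s Hs.
    assert (d (beta s) (rho s) <= 0).
    { apply Rnot_lt_le. intro Hlt. apply Hn. exists s. split; [|exact Hlt].
      destruct (Req_dec s 0) as [E|E]; [|lra]. subst s. rewrite Hr0 in Hlt. unfold q in Hlt.
      rewrite (d_self X d HC) in Hlt. lra. }
    specialize (HCa s Hs). pose proof (dtri (alpha s) (rho s) (beta s)). rewrite (dsym (rho s)) in H0. lra. }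
  destruct HT as [T [HT HcT]].
  set (kappa := Rmin ((d (beta T) (rho T))^2 / T^2) 1).
  assert (Hk : 0 < kappa <= 1).
  { unfold kappa. split; [apply Rmin_pos; [apply Rdiv_lt_0_compat; nra|lra]|apply Rmin_r]. }
  assert (Hang : forall t S, T <= t -> T <= S -> (d (beta t) (rho S))^2 >= t^2 + S^2 - t*S*(2 - kappa)).
  { intros t S Ht HS.
    pose proof (ray_seg X d beta 0 t Rb (Rle_refl 0) ltac:(lra)) as G1.
    pose proof (ray_seg X d rho 0 S Rr (Rle_refl 0) ltac:(lra)) as G2.
    rewrite Hr0 in G2. fold q in G1.
    assert (Hl : 0 <= T / t <= 1) by (split; [apply Rdiv_le_0_compat; lra| apply divle; lra]).
    assert (Hm : 0 <= T / S <= 1) by (split; [apply Rdiv_le_0_compat; lra| apply divle; lra]).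
    pose proof (master X d HC _ _ _ _ _ _ _ G1 G2 Hl Hm) as M. cbv beta in M.
    replace (0 + T / t * t) with T in M by (field; lra).
    replace (0 + T / S * S) with T in M by (field; lra).
    replace (0 + t) with t in M by ring. replace (0 + S) with S in M by ring.
    assert (Eq1 : d q (beta t) = t) by (unfold q; rewrite Rb by lra; rewrite Rabs_left1 by lra; ring).
    assert (Eq2 : d q (rho S) = S) by (rewrite <- Hr0, Rr by lra; rewrite Rabs_left1 by lra; ring).
    rewrite Eq1, Eq2 in M.
    set (c := d (beta T) (rho T)) in *. set (Z := d (beta t) (rho S)) in *.
    assert (Hk0 : kappa * T^2 <= c^2).
    { unfold kappa. assert (Rmin (c ^ 2 / T ^ 2) 1 <= c^2 / T^2) by apply Rmin_l.
      assert (c^2 / T^2 * T^2 = c^2) by (field; lra). nra. }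
    assert (M2 : c^2 * (t * S) <= T^2 * (2 * t * S - (t^2 + S^2 - Z^2))).
    { assert (E: (T / t) ^ 2 * t ^ 2 + (T / S) ^ 2 * S ^ 2 - T / t * (T / S) * (t ^ 2 + S ^ 2 - Z ^ 2)
          = T^2 * (2 * t * S - (t^2 + S^2 - Z^2)) / (t * S)) by (field; lra).
      rewrite E in M. apply (Rmult_le_compat_r (t * S)) in M; [|nra].
      replace (T ^ 2 * (2 * t * S - (t ^ 2 + S ^ 2 - Z ^ 2)) / (t * S) * (t * S)) with
        (T ^ 2 * (2 * t * S - (t ^ 2 + S ^ 2 - Z ^ 2))) in M by (field; lra). exact M. }
    assert (HtS : 0 <= t * S) by nra.
    assert (H1 : kappa * T^2 * (t * S) <= T^2 * (2 * t * S - (t^2 + S^2 - Z^2))).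
    { apply Rle_trans with (c^2 * (t * S)); [apply Rmult_le_compat_r; lra| exact M2]. }
    assert (H2 : kappa * (t * S) <= 2 * t * S - (t^2 + S^2 - Z^2)).
    { apply (Rmult_le_reg_l (T^2)); [nra|]. replace (T^2 * (kappa * (t * S))) with (kappa * T^2 * (t * S)) by ring. exact H1. }
    lra. }
  destruct (archi_nat ((4 * D0 + 5) / kappa)) as [N' HN'].
  set (n := INR (S N')).
  assert (Hn1 : 1 <= n) by (unfold n; rewrite S_INR; pose proof (pos_INR N'); lra).
  assert (Hnk : n * kappa >= 4 * D0 + 5).
  { unfold n. rewrite S_INR. assert ((4 * D0 + 5) / kappa * kappa = 4 * D0 + 5) by (field; lra). nra. }
  set (delta := (/2)^(S N')).
  assert (Hdelta : 0 < delta) by (unfold delta; apply pow_lt; lra).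
  assert (Hdelta1 : delta <= 1).
  { unfold delta. rewrite <- (pow1 (S N')). apply pow_incr. lra. }
  set (f := fun g => dbd X d x0 (fun t => act g (alpha t)) (fun t => act g (beta t))).
  assert (Main : forall F : list G, exists g, ~ In g F /\ delta <= f g).
  { intro F.
    destruct (list_maxR F (fun g => d (act g x0) x0)) as [BF HBF].
    set (t := Rmax T (Rmax (n * (4 * D0 + 5)) (Rmax (D0 + 1) (Rabs BF + d x0 q + D0 + 1)))).
    assert (Ht1 : t >= T) by (unfold t; apply Rle_ge, Rmax_l).
    assert (Ht2 : t >= n * (4 * D0 + 5)) by (unfold t; apply Rle_ge; eapply Rle_trans; [|apply Rmax_r]; apply Rmax_l).
    assert (Ht3 : t >= D0 + 1) by (unfold t; apply Rle_ge; eapply Rle_trans; [|apply Rmax_r];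
       eapply Rle_trans; [|apply Rmax_r]; apply Rmax_l).
    assert (Ht4 : t >= Rabs BF + d x0 q + D0 + 1) by (unfold t; apply Rle_ge; eapply Rle_trans; [|apply Rmax_r];
       eapply Rle_trans; [|apply Rmax_r]; apply Rmax_r).
    destruct (Hnear (beta t)) as [h Hh].
    set (y := act h x0). set (g := inv h).
    exists g. split.
    - intro Hin. specialize (HBF g Hin). cbv beta in HBF.
      assert (Ey : act g y = x0) by (unfold g, y; apply AinvL).
      assert (d x0 y <= BF) by (rewrite <- (Aiso g), Ey; exact HBF).
      assert (Eqt : d q (beta t) = t) by (unfold q; rewrite Rb by lra; rewrite Rabs_left1 by lra; ring).
      pose proof (dtri q x0 (beta t)). pose proof (dtri x0 y (beta t)).
      pose proof (Rle_abs BF). fold y in Hh. rewrite (dsym q x0) in H0. lra.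
    -
      set (xa := fun s => act g (alpha s)). set (xb := fun s => act g (beta s)).
      assert (Spec : forall xi, geodesic_ray X d xi ->
         geodesic_ray X d (ray_from X d x0 xi) /\ ray_from X d x0 xi 0 = x0 /\ asymptotic X d xi (ray_from X d x0 xi)).
      { intros xi Rxi. unfold ray_from. apply epsilon_spec. apply RE. exact Rxi. }
      destruct (Spec xa (Rayact g alpha Ra)) as [R1 [E1 [C1 HC1]]].
      destruct (Spec xb (Rayact g beta Rb)) as [R2 [E2 [C2 HC2]]].
      set (r1 := ray_from X d x0 xa) in *. set (r2 := ray_from X d x0 xb) in *.
      assert (Key : 1 <= d (act h (r1 n)) (act h (r2 n))).
      { apply (core X d HC q beta rho T kappa D0 n Rb Rr eq_refl Hr0 HT Hk Hang HD0 Hn1 Hnk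
                 t y (fun s => act h (r1 s)) (fun s => act h (r2 s)) Ht1 Ht2 Ht3).
        - exact Hh.
        - apply Rayact. exact R1.
        - cbv beta. rewrite E1. reflexivity.
        - exists (C1 + Ca). intros s Hs. cbv beta.
          specialize (HC1 s Hs). specialize (HCa s Hs). unfold xa in HC1.
          rewrite <- (Aiso h) in HC1. unfold g in HC1. rewrite AinvR in HC1.
          pose proof (dtri (act h (r1 s)) (alpha s) (rho s)). pose proof (dsym (act h (r1 s)) (alpha s)). pose proof (dsym (rho s) (act h (r1 s))). lra.
        - apply Rayact. exact R2.
        - cbv beta. rewrite E2. reflexivity.
        - exists C2. intros s Hs. cbv beta.
          specialize (HC2 s Hs). unfold xb in HC2.
          rewrite <- (Aiso h) in HC2. unfold g in HC2. rewrite AinvR in HC2.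
          rewrite dsym. exact HC2. }
      rewrite Aiso in Key.
      unfold f, dbd. fold xa xb. fold r1 r2.
      set (a := fun k => Rmin (d (r1 (INR (S k))) (r2 (INR (S k)))) ((/2)^(S k))).
      assert (Ha : forall k, 0 <= a k <= (/2)^(S k)).
      { intro k. unfold a. split; [apply Rmin_glb; [apply dpos| apply pow_le; lra]| apply Rmin_r]. }
      assert (Hser : a N' <= Series a).
      { apply series_ge; [intro k; apply Ha| apply ex_series_half; exact Ha]. }
      assert (a N' = delta).
      { unfold a. fold n. apply Rmin_right. fold delta. lra. }
      lra. }
  unfold limsupG. fold f.
  unfold Rbar_glb. case (Rbar_ex_glb _). intros m [Hlb0 Hglb]. cbn [proj1_sig].
  assert (Hlb : Rbar_le (Finite delta) m).
  { apply Hglb. intros z [F Hz]. subst z.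
    unfold Rbar_lub. case (Rbar_ex_lub _). intros u [Hub Hub2]. cbn [proj1_sig].
    destruct (Main F) as [g [Hg Hfg]].
    apply (Rbar_le_trans _ (Finite (f g))); [simpl; exact Hfg|].
    apply Hub. exists g. split; [exact Hg|reflexivity]. }
  destruct m as [m| |]; simpl in *; auto; lra.
Qed.
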